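(* Let $\Omega=\{\omega_1,\dots,\omega_N\}$ be a finite set with probabilities $p_i\in(0,1]$, $\sum_{i=1}^N p_i=1$. Let $C\in\mathbb{R}^{d\times n}$, $A\in\mathbb{R}^{k\times n}$, $b\in\mathbb{R}^k$, and for each $i$ let $Q_i\in\mathbb{R}^{d\times m}$, $T_i\in\mathbb{R}^{\ell\times n}$, $W_i\in\mathbb{R}^{\ell\times m}$, $u^i\in\mathbb{R}^\ell$. Let $S\subseteq\mathbb{R}^{n+Nm}$ be the set of all $z=(x,y^1,\dots,y^N)$ with $x\in\mathbb{R}^n$, $y^i\in\mathbb{R}^m$, $Ax=b$, $T_ix+W_iy^i=u^i$ for $i=1,\dots,N$, and $x\ge 0$, $y^1,\dots,y^N\ge 0$, and let $Pz := Cx+\sum_{i=1}^N p_iQ_iy^i$. Suppose $\bar z=(\bar x,\bar y^1,\dots,\bar y^N)\in S$ is a minimizer of the multi-objective linear program ''minimize $Pz$ subject to $z\in S$''. Then for every $i\in\{1,\dots,N\}$, $\bar y^i$ is a minimizer of the multi-objective linear program ''minimize $C\bar x+Q_iy$ subject to $W_iy=u^i-T_i\bar x$, $y\ge 0$, $y\in\mathbb{R}^m$''.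
   Context: Objective values in $\mathbb{R}^d$ are ordered componentwise (ordering cone $\mathbb{R}^d_+$). For a multi-objective linear program ''minimize $Mw$ subject to $w\in D$'' (with $D$ a polyhedral feasible set and $M$ a matrix), its upper image is $\bigcup_{w\in D}\{Mw\}+\mathbb{R}^d_+$; a point $\bar v$ of the upper image is minimal if there is no $v$ in the upper image with $v\in\{\bar v\}-(\mathbb{R}^d_+\setminus\{0\})$; a feasible $\bar w\in D$ is a minimizer if $M\bar w$ is minimal in the upper image. *)

(* Defs.v *)
From HB Require Import structures.
From mathcomp Require Import all_boot all_order all_algebra.
Set Implicit Arguments. Unset Strict Implicit. Unset Printing Implicit Defensive.
Import Order.TTheory GRing.Theory Num.Theory.
Local Open Scope ring_scope.

Definition vnonneg (R : realFieldType) (d : nat) (u : 'cV[R]_d) : Prop :=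
  forall i : 'I_d, 0 <= u i 0.

Definition upper_image (R : realFieldType) (d : nat) (V : Type)
    (D : V -> Prop) (F : V -> 'cV[R]_d) : 'cV[R]_d -> Prop :=
  fun v => exists w, D w /\ exists c : 'cV[R]_d, vnonneg c /\ v = F w + c.

Definition minimal_in (R : realFieldType) (d : nat)
    (U : 'cV[R]_d -> Prop) (vbar : 'cV[R]_d) : Prop :=
  U vbar /\
  ~ (exists v, U v /\ exists c : 'cV[R]_d, vnonneg c /\ c <> 0 /\ v = vbar - c).

Definition minimizer (R : realFieldType) (d : nat) (V : Type)
    (D : V -> Prop) (F : V -> 'cV[R]_d) (wbar : V) : Prop :=
  D wbar /\ minimal_in (upper_image D F) (F wbar).

(* Main.v *)
Require Import Defs.
From HB Require Import structures.
From mathcomp Require Import all_boot all_order all_algebra.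
Import Order.TTheory GRing.Theory Num.Theory.
Local Open Scope ring_scope.

Theorem proposition2p5 (R : realFieldType) (N d n m k l : nat)
    (p : 'I_N -> R)
    (hp : forall i, 0 < p i /\ p i <= 1)
    (hsum : \sum_(i < N) p i = 1)
    (C : 'M[R]_(d, n)) (A : 'M[R]_(k, n)) (b : 'cV[R]_k)
    (Q : 'I_N -> 'M[R]_(d, m)) (T : 'I_N -> 'M[R]_(l, n))
    (W : 'I_N -> 'M[R]_(l, m)) (u : 'I_N -> 'cV[R]_l)
    (xbar : 'cV[R]_n) (ybar : 'I_N -> 'cV[R]_m) :
  let S := fun z : 'cV[R]_n * ('I_N -> 'cV[R]_m) =>
    A *m z.1 = b /\ (forall i, T i *m z.1 + W i *m z.2 i = u i) /\
    vnonneg z.1 /\ (forall i, vnonneg (z.2 i)) in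
  let P := fun z : 'cV[R]_n * ('I_N -> 'cV[R]_m) =>
    C *m z.1 + \sum_(i < N) p i *: (Q i *m z.2 i) in
  minimizer S P (xbar, ybar) ->
  forall i : 'I_N,
    minimizer (fun y : 'cV[R]_m => W i *m y = u i - T i *m xbar /\ vnonneg y)
              (fun y : 'cV[R]_m => C *m xbar + Q i *m y) (ybar i).
Proof.
move=> S P [[hA [hT [hx hy]]] [_ hmin]] i.
have feas : W i *m ybar i = u i - T i *m xbar.
  by rewrite -(hT i) /= addrAC subrr add0r.
split; first by split => //; exact: hy.
split.
  exists (ybar i); split; first by split => //; exact: hy.
  by exists 0; split; [move=> j; rewrite mxE | rewrite addr0].
move=> [v [[y [[hWy hy0] [c' [hc' ->]]]] [c [hc [hc0 hv]]]]].
apply: hmin.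
pose y' := fun j => if j == i then y else ybar j.
exists (P (xbar, y')); split.
  exists (xbar, y'); split.
    split => //; split.
      move=> j /=; rewrite /y'; case: eqP => [->|_]; last exact: hT.
      by rewrite hWy addrC subrK.
    split => // j /=; rewrite /y'; case: eqP => _ //; exact: hy.
  by exists 0; split; [move=> j; rewrite mxE | rewrite addr0].
exists (p i *: (c + c')); split.
  move=> j; rewrite !mxE; apply: mulr_ge0; first exact: ltW (hp i).1.
  by apply: addr_ge0.
split.
  have [a hab] : exists a, c a 0 != 0.
    case: (pickP (fun a => c a 0 != 0)) => [a ha|H]; first by exists a.
    exfalso; apply: hc0; apply/matrixP => a b0.
    have -> : b0 = 0 by apply/val_inj => /=; case: b0 => [[]].
    by rewrite mxE; move: (H a) => /negbFE/eqP.
  move/matrixP => /(_ a 0); rewrite !mxE => /eqP; apply/negP; rewrite gt_eqF //.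
  apply: mulr_gt0; first exact: (hp i).1.
  apply: ltr_wpDr; first exact: hc'.
  by rewrite lt_def hab hc.
have hQ : Q i *m y = Q i *m ybar i - (c + c').
  apply: (addrI (C *m xbar)); apply: (addIr c'); rewrite addrA hv.
  by rewrite opprD !addrA subrK.
rewrite /P /= (bigD1 i) //= [in RHS](bigD1 i) //= /y' eqxx.
rewrite (eq_bigr (fun j => p j *: (Q j *m ybar j))); last first.
  by move=> j /negPf ->.
rewrite hQ scalerBr.
set s1 := \sum_(j < N | j != i) _.
by rewrite !addrA addrAC.
Qed.
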